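(* $\mathcal{OBLOT}^{S}_{\mathcal{F.V.}} > \mathcal{OBLOT}^{S}_{\mathcal{L.V.}}$, i.e. the model $\mathcal{OBLOT}$ under the semi-synchronous scheduler with full visibility is computationally more powerful than the model $\mathcal{OBLOT}$ under the semi-synchronous scheduler with limited visibility.
   Context: Robots are anonymous, identical, autonomous computational entities viewed as points moving in the Euclidean plane. Each has its own local coordinate system, with no agreement between robots and no common chirality, and perceives itself at its origin. Robots operate in Look-Compute-Move cycles. In Look a robot takes an instantaneous snapshot of the positions (and visible lights, if any) of the robots it can see. In Compute it runs the common algorithm on the snapshot to obtain a destination. In Move it moves there. Models: - $\mathcal{OBLOT}$: robots are oblivious (no memory of previous cycles) and silent (no means of communication). - $\mathcal{LUMI}$: each robot carries a persistent light whose color is taken from a finite set and is set at the end of Compute; the light is visible to the robot itself and to the other robots. - $\mathcal{FSTA}$: the light is internal, visible only to its owner. It acts as a finite persistent state; there is no communication. - $\mathcal{FCOM}$: the light is visible only to the other robots. A robot does not see its own light and is otherwise oblivious. Schedulers: time is divided into rounds. Under the semi-synchronous scheduler $S$ (SSYNCH), in each round an adversarially chosen set of robots is activated and they perform one full cycle in perfect synchronization; every robot is activated infinitely often. Under the fully synchronous scheduler $F$ (FSYNCH), every robot is activated in every round. Visibility: - Full visibility $\mathcal{F.V.}$: every robot sees all robots. - Limited visibility $\mathcal{L.V.}$: a robot sees only the robots within a fixed distance $V_r$ of its current position, with $V_r$ the same for all robots. The visibility graph (robots adjacent iff they see each other) of the initial configuration is assumed connected. Relations: $\mathcal{M}^X_V$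 denotes model $\mathcal{M}$ under scheduler $X$ with visibility $V$. For a team $R$ of robots, $Task(\mathcal{M},X,V;R)$ is the set of problems (tasks where robots must form some configuration(s) subject to conditions) solvable by $R$ in that setting. $\mathcal{R}$ is the set of all teams, and $\mathcal{R}_n$ the set of teams of size $n$. - $\mathcal{M}^{X_1}_{V_1} \ge \mathcal{N}^{X_2}_{V_2}$ if for all $R\in\mathcal{R}$, $Task(\mathcal{M},X_1,V_1;R)\supseteq Task(\mathcal{N},X_2,V_2;R)$. - $>$ means $\ge$ holds and there exists $R\in\mathcal{R}$ with $Task(\mathcal{M},X_1,V_1;R)\setminus Task(\mathcal{N},X_2,V_2;R)\neq\emptyset$. - $\perp$ (incomparable) means there exist $R_1,R_2\in\mathcal{R}$ with $Task(\mathcal{M},X_1,V_1;R_1)\setminus Task(\mathcal{N},X_2,V_2;R_1)\neq\emptyset$ and $Task(\mathcal{N},X_2,V_2;R_2)\setminus Task(\mathcal{M},X_1,V_1;R_2)\neq\emptyset$. *)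

(* Defs.v *)
From Stdlib Require Import Reals Relations.
From mathcomp Require Import ssreflect ssrbool ssrfun eqtype ssrnat fintype.



Unset Printing Implicit Defensive.

Local Open Scope R_scope.

Definition point : Type := (R * R)%type.

Definition dist (p q : point) : R :=
  sqrt ((fst p - fst q) ^ 2 + (snd p - snd q) ^ 2).

(** A local coordinate system, up to its origin (which is always the
    robot's current position): an arbitrary invertible similarity of the
    plane, i.e. rotation + scaling (a,b) <> (0,0), possibly composed with a
    reflection (no common chirality). *)
Record frame : Type := mkFrame {
  fa : R; fb : R; frefl : bool;
  fnz : fa * fa + fb * fb <> 0 }.

Definition lin (f : frame) (v : point) : point :=
  let x := fst v in
  let y := if frefl f then - snd v else snd v in
  (fa f * x - fb f * y, fb f * x + fa f * y).

Definition to_local (f : frame) (me p : point) : point :=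
  lin f (fst p - fst me, snd p - snd me).

(** Length scaling factor of the frame: a global length [l] measures
    [frame_scale f * l] in local units. *)
Definition frame_scale (f : frame) : R := sqrt (fa f * fa f + fb f * fb f).

Record team : Type := mkTeam {
  tsize : nat;
  tVr : R;
  tVr_pos : 0 < tVr }.

Definition config (n : nat) : Type := 'I_n -> point.

(** An execution: the sequence of global configurations at the beginning
    of each round. *)
Definition execution (n : nat) : Type := nat -> config n.

Definition problem (Rt : team) : Type := execution (tsize Rt) -> Prop.

Inductive scheduler : Type := SSYNCH | FSYNCH.
Inductive visibility : Type := FullVis | LimitedVis.

Definition activation (n : nat) : Type := nat -> 'I_n -> bool.

Definition sched_ok (X : scheduler) (n : nat) (act : activation n) : Prop :=
  match X with
  | SSYNCH =>
      (forall t, exists i, act t i) /\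
      (forall i t, exists t', (t <= t')%nat /\ act t' i)
  | FSYNCH => forall t i, act t i
  end.

Definition sees (V : visibility) (Vr : R) (p q : point) : Prop :=
  match V with
  | FullVis => True
  | LimitedVis => dist p q <= Vr
  end.

(** Robots are anonymous and there is
    no multiplicity detection, so a snapshot is a set of points. *)
Definition snapshot (V : visibility) (Vr : R) n (f : frame) (C : config n)
    (i : 'I_n) : point -> Prop :=
  fun q => exists j : 'I_n, sees V Vr (C i) (C j) /\ q = to_local f (C i) (C j).

(** An OBLOT algorithm: from the (known) visibility radius expressed in the
    robot's local unit and the snapshot, compute a destination in local
    coordinates.  No memory, no lights. *)
Definition oblot_algorithm : Type := R -> (point -> Prop) -> point.

(** [E] is an execution of algorithm [A] (rigid moves): an activated robot
    Looks at the configuration of the beginning of the round and moves to its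
    computed destination; inactive robots stay put. *)
Definition oblot_exec (V : visibility) (Vr : R) n (A : oblot_algorithm)
    (F : 'I_n -> frame) (act : activation n) (E : execution n) : Prop :=
  forall (t : nat) (i : 'I_n),
    if act t i then
      to_local (F i) (E t i) (E t.+1 i)
        = A (frame_scale (F i) * Vr) (snapshot V Vr n (F i) (E t) i)
    else E t.+1 i = E t i.

Definition vis_connected (Vr : R) n (C : config n) : Prop :=
  forall i j : 'I_n,
    clos_refl_trans 'I_n (fun a b => dist (C a) (C b) <= Vr) i j.

Definition Task_OBLOT (X : scheduler) (V : visibility) (Rt : team)
    (P : problem Rt) : Prop :=
  exists A : oblot_algorithm,
    forall (F : 'I_(tsize Rt) -> frame) (act : activation (tsize Rt))
           (E : execution (tsize Rt)),
      sched_ok X (tsize Rt) act ->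
      vis_connected (tVr Rt) (tsize Rt) (E 0%nat) ->
      oblot_exec V (tVr Rt) (tsize Rt) A F act E ->
      P E.

Definition OBLOT_ge (X1 : scheduler) (V1 : visibility)
    (X2 : scheduler) (V2 : visibility) : Prop :=
  forall (Rt : team) (P : problem Rt),
    Task_OBLOT X2 V2 Rt P -> Task_OBLOT X1 V1 Rt P.

Definition OBLOT_gt (X1 : scheduler) (V1 : visibility)
    (X2 : scheduler) (V2 : visibility) : Prop :=
  OBLOT_ge X1 V1 X2 V2 /\
  exists (Rt : team) (P : problem Rt),
    Task_OBLOT X1 V1 Rt P /\ ~ Task_OBLOT X2 V2 Rt P.

(* Main.v *)
From Stdlib Require Import Reals Relations Lra FunctionalExtensionality PropExtensionality ClassicalDescription.
From mathcomp Require Import ssreflect ssrbool ssrfun eqtype ssrnat fintype.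
Require Import Defs.

Local Open Scope R_scope.

Definition lnorm (v : point) : R := sqrt (fst v ^ 2 + snd v ^ 2).

Lemma ab_nonneg (f : frame) : 0 <= fa f * fa f + fb f * fb f.
Proof. nra. Qed.

Lemma lnorm_tl f me p : lnorm (to_local f me p) = frame_scale f * dist me p.
Proof.
  rewrite /lnorm /to_local /lin /frame_scale /dist /=.
  rewrite -sqrt_mult_alt; last exact: ab_nonneg.
  f_equal. case: (frefl f) => /=; ring.
Qed.

Lemma scale_pos f : 0 < frame_scale f.
Proof.
  apply: sqrt_lt_R0. have := ab_nonneg f. have := fnz f. lra.
Qed.

Definition restrictA (A : oblot_algorithm) : oblot_algorithm :=
  fun r S => A r (fun q => S q /\ lnorm q <= r).

Lemma snap_eq Vr n f (C : config n) i : 0 < Vr ->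
  (fun q => snapshot FullVis Vr n f C i q /\ lnorm q <= frame_scale f * Vr)
  = snapshot LimitedVis Vr n f C i.
Proof.
  move=> HV. apply: functional_extensionality => q.
  apply: propositional_extensionality; split.
  - move=> [[j [_ ->]] Hn]. exists j; split => //=.
    rewrite lnorm_tl in Hn. apply: Rmult_le_reg_l Hn. exact: scale_pos.
  - move=> [j [Hd ->]]. split; first by exists j.
    rewrite lnorm_tl. apply: Rmult_le_compat_l => //. exact: Rlt_le (scale_pos f).
Qed.

Lemma ge_part : OBLOT_ge SSYNCH FullVis SSYNCH LimitedVis.
Proof.
  move=> Rt P [A HA]. exists (restrictA A) => F act E Hs Hc Hex.
  apply: (HA F act E Hs Hc) => t i. move: (Hex t i).
  case: (act t i) => // ->. rewrite /restrictA. f_equal.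
  apply: snap_eq. exact: tVr_pos.
Qed.

Lemma lin_inj f u v : lin f u = lin f v -> u = v.
Proof.
  case: u => x y; case: v => x' y'. rewrite /lin /=.
  have Hnz := fnz f.
  move: Hnz. set a := fa f. set b := fb f. move=> Hnz.
  have key : forall yy yy', a * x - b * yy = a * x' - b * yy' ->
      b * x + a * yy = b * x' + a * yy' -> x = x' /\ yy = yy'.
    move=> yy yy' H1 H2.
    have E1 : (a*a+b*b) * (x - x') = 0.
      have -> : (a*a+b*b) * (x - x') = a * ((a * x - b * yy) - (a * x' - b * yy'))
         + b * ((b * x + a * yy) - (b * x' + a * yy')) by ring.
      rewrite H1 H2; ring.
    have E2 : (a*a+b*b) * (yy - yy') = 0.
      have -> : (a*a+b*b) * (yy - yy') = - b * ((a * x - b * yy) - (a * x' - b * yy'))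
         + a * ((b * x + a * yy) - (b * x' + a * yy')) by ring.
      rewrite H1 H2; ring.
    case: (Rmult_integral _ _ E1) => // ?. case: (Rmult_integral _ _ E2) => // ?.
    split; lra.
  case: (frefl f) => [] [] H1 H2; case: (key _ _ H1 H2) => ? ?; f_equal; lra.
Qed.

Lemma tl_inj f me p q : to_local f me p = to_local f me q -> p = q.
Proof.
  case: p q me => x y [x' y'] [m1 m2].
  rewrite /to_local => /lin_inj [] /= ? ?. f_equal; lra.
Qed.

Lemma tl_self f me : to_local f me me = (0, 0).
Proof. rewrite /to_local /lin /=. case: (frefl f) => /=; f_equal; ring. Qed.

Definition Rt3 : team := mkTeam 3 1 Rlt_0_1.

Definition r0 : 'I_3 := @Ordinal 3 0 isT.
Definition r1 : 'I_3 := @Ordinal 3 1 isT.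
Definition r2 : 'I_3 := @Ordinal 3 2 isT.

Lemma ord3 (j : 'I_3) : j = r0 \/ j = r1 \/ j = r2.
Proof.
  case: j => [[|[|[|m]]] Hm].
  - left; exact: val_inj.
  - right; left; exact: val_inj.
  - right; right; exact: val_inj.
  - by [].
Qed.

Definition p0 : point := (0, 0).
Definition p1 : point := (1, 0).
Definition p2 : point := (2, 0).

Definition C1 : config 3 := fun i =>
  if nat_of_ord i == 0%N then p0 else if nat_of_ord i == 1%N then p1 else p2.
Definition C2 : config 3 := fun i =>
  if nat_of_ord i == 0%N then p0 else p1.

Lemma C1_0 : C1 r0 = p0. Proof. reflexivity. Qed.
Lemma C1_1 : C1 r1 = p1. Proof. reflexivity. Qed.
Lemma C1_2 : C1 r2 = p2. Proof. reflexivity. Qed.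
Lemma C2_0 : C2 r0 = p0. Proof. reflexivity. Qed.
Lemma C2_1 : C2 r1 = p1. Proof. reflexivity. Qed.
Lemma C2_2 : C2 r2 = p1. Proof. reflexivity. Qed.

Lemma dist_x a b : dist (a, 0) (b, 0) = Rabs (a - b).
Proof.
  rewrite /dist /= -sqrt_Rsqr_abs. f_equal. rewrite /Rsqr. ring.
Qed.

Ltac dcomp := rewrite /p0 /p1 /p2 dist_x; unfold Rabs; destruct Rcase_abs; lra.

Lemma d01 : dist p0 p1 <= 1. Proof. dcomp. Qed.
Lemma d10 : dist p1 p0 <= 1. Proof. dcomp. Qed.
Lemma d11 : dist p1 p1 <= 1. Proof. dcomp. Qed.
Lemma d00 : dist p0 p0 <= 1. Proof. dcomp. Qed.
Lemma d22 : dist p2 p2 <= 1. Proof. dcomp. Qed.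
Lemma d12 : dist p1 p2 <= 1. Proof. dcomp. Qed.
Lemma d21 : dist p2 p1 <= 1. Proof. dcomp. Qed.
Lemma d02 : ~ dist p0 p2 <= 1. Proof. dcomp. Qed.
Lemma d20 : ~ dist p2 p0 <= 1. Proof. dcomp. Qed.

Lemma p01 : p0 <> p1. Proof. case; lra. Qed.
Lemma p02 : p0 <> p2. Proof. case; lra. Qed.
Lemma p12 : p1 <> p2. Proof. case; lra. Qed.

Lemma conn1 : vis_connected 1 3 C1.
Proof.
  have H : forall i, dist (C1 i) (C1 r1) <= 1 /\ dist (C1 r1) (C1 i) <= 1.
    move=> i; case: (ord3 i) => [->|[->|->]];
    rewrite ?C1_0 ?C1_1 ?C1_2; split;
    first [exact d01|exact d10|exact d11|exact d12|exact d21].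
  move=> i j. apply: (rt_trans _ _ _ r1).
  - apply: rt_step. exact: (H i).1.
  - apply: rt_step. exact: (H j).2.
Qed.

Lemma conn2 : vis_connected 1 3 C2.
Proof.
  have H : forall i, dist (C2 i) (C2 r1) <= 1 /\ dist (C2 r1) (C2 i) <= 1.
    move=> i; case: (ord3 i) => [->|[->|->]];
    rewrite ?C2_0 ?C2_1 ?C2_2; split;
    first [exact d01|exact d10|exact d11|exact d12|exact d21].
  move=> i j. apply: (rt_trans _ _ _ r1).
  - apply: rt_step. exact: (H i).1.
  - apply: rt_step. exact: (H j).2.
Qed.

Definition Pb : problem Rt3 := fun E : execution 3 =>
  (E 0%nat = C1 -> E 1%nat = C1) /\ (E 0%nat = C2 -> E 1%nat <> C2).

Definition three (S : point -> Prop) : Prop :=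
  exists x y z, S x /\ S y /\ S z /\ x <> y /\ y <> z /\ x <> z.

Definition Afv : oblot_algorithm := fun r S =>
  if excluded_middle_informative (three S) then (0, 0) else (1, 0).

Lemma three_C1 f i : three (snapshot FullVis 1 3 f C1 i).
Proof.
  exists (to_local f (C1 i) (C1 r0)), (to_local f (C1 i) (C1 r1)),
    (to_local f (C1 i) (C1 r2)).
  split; first by exists r0. split; first by exists r1. split; first by exists r2.
  rewrite C1_0 C1_1 C1_2.
  split; last split; move/tl_inj; [exact p01|exact p12|exact p02].
Qed.

Lemma C2_vals j : C2 j = p0 \/ C2 j = p1.
Proof. case: (ord3 j) => [->|[->|->]]; [left|right|right]; reflexivity. Qed.

Lemma nthree_C2 f i : ~ three (snapshot FullVis 1 3 f C2 i).
Proof.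
  move=> [x [y [z [[jx [_ ->]] [[jy [_ ->]] [[jz [_ ->]] [H1 [H2 H3]]]]]]]].
  case: (C2_vals jx) => Ex; case: (C2_vals jy) => Ey; case: (C2_vals jz) => Ez;
  rewrite ?Ex ?Ey ?Ez in H1 H2 H3; congruence.
Qed.

Lemma fv_solves : Task_OBLOT SSYNCH FullVis Rt3 Pb.
Proof.
  exists Afv => F act E Hs Hc Hex. split.
  - move=> E0. apply: functional_extensionality => i.
    move: (Hex 0%nat i). case: (act 0%nat i); last by rewrite E0.
    rewrite /Afv E0. destruct (excluded_middle_informative _) as [Ht|H]; last first.
      by case: H; apply: three_C1.
    rewrite -(tl_self (F i) (C1 i)). exact: tl_inj.
  - move=> E0 E1. case: Hs => [/(_ 0%nat) [i Hi] _].
    move: (Hex 0%nat i). rewrite Hi /Afv.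
    destruct (excluded_middle_informative _) as [H|Ht].
      by exfalso; move: H; rewrite E0; apply: nthree_C2.
    move=> /= Heq. move: Heq. rewrite E1 E0 tl_self. case; lra.
Qed.

Definition idf : frame := mkFrame 1 0 false ltac:(lra).

Fixpoint exe (A : oblot_algorithm) (C : config 3) (t : nat) : config 3 :=
  match t with
  | O => C
  | S t => fun i =>
      let d := A (frame_scale idf * 1)
                 (snapshot LimitedVis 1 3 idf (exe A C t) i) in
      (fst (exe A C t i) + fst d, snd (exe A C t i) + snd d)
  end.

Lemma exe_ok A C : oblot_exec LimitedVis 1 3 A (fun _ => idf) (fun _ _ => true) (exe A C).
Proof.
  move=> t i /=. set d := A _ _. case: d => dx dy.
  rewrite /to_local /lin /=. f_equal; ring.
Qed.

Lemma sched_all : sched_ok SSYNCH 3 (fun _ _ => true).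
Proof. split; first by move=> t; exists r0. move=> i t; exists t; split => //. Qed.

Lemma tlid me p : to_local idf me p = (fst p - fst me, snd p - snd me).
Proof. rewrite /to_local /lin /=. f_equal; ring. Qed.

Lemma snapLV_0 : snapshot LimitedVis 1 3 idf C2 r0 = snapshot LimitedVis 1 3 idf C1 r0.
Proof.
  apply: functional_extensionality => q; apply: propositional_extensionality.
  rewrite /snapshot /=. split.
  - move=> [j [Hd ->]]. case: (C2_vals j) => Ej; rewrite Ej C2_0 in Hd *.
    + exists r0; by rewrite C1_0.
    + exists r1; by rewrite C1_1 C1_0.
  - move=> [j [Hd ->]]. case: (ord3 j) => [Ej|[Ej|Ej]]; rewrite Ej ?C1_0 ?C1_1 ?C1_2 in Hd *.
    + exists r0; rewrite C2_0; split; [exact d00|reflexivity].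
    + exists r1; rewrite C2_1 C2_0; split; [exact d01|reflexivity].
    + by case: (d02 Hd).
Qed.

Lemma snapLV_12 i : i <> r0 ->
  snapshot LimitedVis 1 3 idf C2 i = snapshot LimitedVis 1 3 idf C1 r2.
Proof.
  move=> Hi. have Ci : C2 i = p1.
    by case: (ord3 i) => [//|[->|->]]; reflexivity.
  apply: functional_extensionality => q; apply: propositional_extensionality.
  rewrite /snapshot /= C1_2 Ci. split.
  - move=> [j [Hd ->]]. case: (C2_vals j) => Ej; rewrite Ej in Hd *.
    + exists r1; rewrite C1_1 !tlid /p0 /p1 /p2 /=. split; [exact d21|f_equal; ring].
    + exists r2; rewrite C1_2 !tlid /p0 /p1 /p2 /=. split; [exact d22|f_equal; ring].
  - move=> [j [Hd ->]]. case: (ord3 j) => [Ej|[Ej|Ej]]; rewrite Ej ?C1_0 ?C1_1 ?C1_2 in Hd *.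
    + by case: (d20 Hd).
    + exists r0; rewrite C2_0 !tlid /p0 /p1 /p2 /=. split; [exact d10|f_equal; ring].
    + exists r1; rewrite C2_1 !tlid /p0 /p1 /p2 /=. split; [exact d11|f_equal; ring].
Qed.

Lemma stay A C i : exe A C 1 i = C i ->
  A (frame_scale idf * 1) (snapshot LimitedVis 1 3 idf C i) = (0, 0).
Proof.
  rewrite /=. set d := A _ _. case: d => dx dy /= H.
  case: (C i) H => x y [] ? ?. f_equal; lra.
Qed.

Lemma lv_fails : ~ Task_OBLOT SSYNCH LimitedVis Rt3 Pb.
Proof.
  move=> [A HA].
  have H1 := HA (fun _ => idf) (fun _ _ => true) (exe A C1) sched_all conn1 (exe_ok A C1).
  have H2 := HA (fun _ => idf) (fun _ _ => true) (exe A C2) sched_all conn2 (exe_ok A C2).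
  have E1 := H1.1 erefl.
  have S0 := stay A C1 r0 (f_equal (fun E => E r0) E1).
  have S2 := stay A C1 r2 (f_equal (fun E => E r2) E1).
  apply: (H2.2 erefl). apply: functional_extensionality => i /=.
  have -> : A (frame_scale idf * 1) (snapshot LimitedVis 1 3 idf C2 i) = (0, 0).
    case: (ord3 i) => [->|Hi]; first by rewrite snapLV_0.
    rewrite snapLV_12 //. by case: Hi => ->.
  case: (C2 i) => x y /=. f_equal; ring.
Qed.

Theorem theorem2 : OBLOT_gt SSYNCH FullVis SSYNCH LimitedVis.
Proof.
  split; first exact: ge_part.
  exists Rt3, Pb. split; [exact: fv_solves | exact: lv_fails].
Qed.
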